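(* Let $X$ be a finite set of proposals. Every profile-index-based DSF $\Delta_\delta$ induced by a neutral profile index function $\delta$ satisfies Clone Consistency: for every profile $R$ and proposals $x,x',y$ such that $x$ and $x'$ are clones in $R$ but $x$ and $y$ are not clones in $R$, if $\{x,y\}\subseteq\Delta_\delta(R)$ then $\{x,x',y\}\subseteq\Delta_\delta(R)$.
   Context: $X!$ is the set of strict linear orders on $X$; a profile is a function $R:N\to X!$ with $N\subset\mathbb{N}$ finite and nonempty. A profile index function is a function $\delta$ from the set of all profiles to $\mathbb{R}$; it is neutral if $\delta(R)=\delta(\sigma(R))$ for every permutation $\sigma:X\to X$ (applied to rename proposals in every ranking). For a proposal $x$, $R^{\hat{x}}$ is the profile obtained from $R$ by moving $x$ to the top of every agent's ranking (leaving the relative order of the other proposals unchanged). The profile-index-based DSF is $\Delta_\delta(R)=\arg\min_{x\in X}\delta(R^{\hat{x}})$. Two proposals are clones in $R$ if they appear adjacent to one another in every agent's ranking in $R$. *)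

(* Defs.v *)
From HB Require Import structures.
From mathcomp Require Import all_boot all_fingroup.
From mathcomp.finmap Require Import finmap.
From Stdlib Require Import Reals.

Set Implicit Arguments.
Unset Strict Implicit.
Unset Printing Implicit Defensive.

Local Open Scope fmap_scope.

Section Defs.
Variable X : finType.

(* X! : strict linear orders on X, encoded as the list of all proposals from
   best (head) to worst, without repetition. *)
Definition is_ranking (s : seq X) : bool := uniq s && (size s == #|X|).

Record ranking := Ranking { rseq :> seq X; rseqP : is_ranking rseq }.

HB.instance Definition _ := [isSub for rseq].
HB.instance Definition _ := [Equality of ranking by <:].
HB.instance Definition _ := [Choice of ranking by <:].

(* a profile R : N -> X!, N a finite subset of nat (nonemptiness is required
   separately by [profile_ok]) *)
Definition profile := {fmap nat -> ranking}.
Definition profile_ok (R : profile) : Prop := domf R != fset0.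

Lemma perm_rankingP (sigma : {perm X}) (r : ranking) :
  is_ranking (map sigma r).
Proof.
have /andP [us ss] := rseqP r; apply/andP; split.
  by rewrite map_inj_uniq //; exact: perm_inj.
by rewrite size_map.
Qed.
Definition perm_ranking sigma r := Ranking (perm_rankingP sigma r).
Definition perm_profile (sigma : {perm X}) (R : profile) : profile :=
  [fmap i : domf R => perm_ranking sigma (R i)].

Lemma top_rankingP (x : X) (r : ranking) :
  is_ranking (x :: filter (predC1 x) r).
Proof.
have /andP [us /eqP ss] := rseqP r; set s := rseq r in us ss *; apply/andP; split.
  by rewrite /= filter_uniq // mem_filter /= eqxx.
have xs : x \in s.
  have /subset_cardP : #|s| = #|X| by rewrite (card_uniqP us).
  by move=> /(_ (subset_predT _)) /= e; rewrite -[x \in s]/(x \in mem s) e.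
have c := count_predC (pred1 x) s.
rewrite (count_uniq_mem _ us) xs in c.
by rewrite /= size_filter -ss -c add1n.
Qed.
Definition top_ranking x r := Ranking (top_rankingP x r).
Definition top_profile (x : X) (R : profile) : profile :=
  [fmap i : domf R => top_ranking x (R i)].

Definition neutral (delta : profile -> R) : Prop :=
  forall (sigma : {perm X}) (P : profile), profile_ok P ->
    delta P = delta (perm_profile sigma P).

(* membership in Delta_delta(R) = argmin_x delta(R^x) *)
Definition in_DSF (delta : profile -> R) (P : profile) (x : X) : Prop :=
  forall y : X, Rle (delta (top_profile x P)) (delta (top_profile y P)).

Definition adjacent (r : ranking) (x x' : X) : bool :=
  (index x r == (index x' r).+1) || (index x' r == (index x r).+1).
Definition clones (P : profile) (x x' : X) : Prop :=
  forall i : domf P, adjacent (P i) x x'.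

End Defs.

(* Main.v *)
Require Import Defs.
From HB Require Import structures.
From mathcomp Require Import all_boot all_fingroup.
From mathcomp.finmap Require Import finmap.
From Stdlib Require Import Reals.
Lemma keyL (X : finType) (x x' : X) (s : seq X) : uniq s -> x' \in s ->
  index x' s = (index x s).+1 ->
  map (tperm x x') [seq z <- s | z != x] = [seq z <- s | z != x'].
Proof.
elim: s => [|a s IH] //= /andP [aS us].
case: (eqVneq a x) => [E|ax].
  subst a => /=.
  case: (eqVneq x x') => [<-//|xx'] /=.
  rewrite inE eq_sym (negPf xx') /=.
  case: s aS us IH => [|b s] // aS; rewrite [uniq _]/= => /andP [bs us] _ _ /=.
  case: (eqVneq b x') => [E|] //; subst b => _ /=.
  rewrite eq_sym xx' /= tpermR. congr (_ :: _).
  rewrite inE negb_or in aS; case/andP: aS => xb xs.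
  rewrite (eq_in_filter (a2 := predT)) ?filter_predT; last first.
    by move=> z zs /=; apply/negP => /eqP E; rewrite -E zs in xs.
  rewrite (eq_in_filter (a2 := predT)) ?filter_predT; last first.
    by move=> z zs /=; apply/negP => /eqP E; rewrite -E zs in bs.
  rewrite -[RHS]map_id; apply/eq_in_map => z zs.
  rewrite tpermD //; apply/negP => /eqP E; subst z.
    by rewrite zs in xs.
  by rewrite zs in bs.
rewrite inE.
case: (eqVneq x' a) => [ax'|ax'] //= xs [E].
rewrite IH //.
by rewrite tpermD // ?(eq_sym a) // eq_sym.
Qed.

Lemma mem_rank (X : finType) (r : ranking X) (x : X) : x \in rseq r.
Proof.
have /andP [us /eqP ss] := rseqP r.
have /subset_cardP : #|rseq r| = #|X| by rewrite (card_uniqP us).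
by move=> /(_ (subset_predT _)) /= e; rewrite -[x \in _]/(x \in mem (rseq r)) e.
Qed.

Lemma top_swap (X : finType) (r : ranking X) (x x' : X) :
  adjacent r x x' ->
  perm_ranking (tperm x x') (top_ranking x r) = top_ranking x' r.
Proof.
move=> adj; apply: val_inj => /=; rewrite tpermL; congr (_ :: _).
have /andP [us _] := rseqP r.
case/orP: adj => /eqP E.
  rewrite -(@keyL _ x' x) ?mem_rank // -map_comp tpermC.
  by rewrite -[RHS]map_id; apply: eq_map => z /=; rewrite tpermK.
by rewrite keyL ?mem_rank.
Qed.

Theorem proposition4 (X : finType) (delta : profile X -> R) :
  neutral delta ->
  forall (P : profile X) (x x' y : X),
    profile_ok P ->
    clones P x x' -> ~ clones P x y ->
    in_DSF delta P x -> in_DSF delta P y ->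
    in_DSF delta P x /\ in_DSF delta P x' /\ in_DSF delta P y.
Proof.
move=> neu P x x' y ok cl _ hx hy; split=> //; split=> //.
have E : perm_profile (tperm x x') (top_profile x P) = top_profile x' P.
  apply: getfP => // k kMf kMg.
  rewrite /perm_profile /top_profile /= !ffunE /=.
  rewrite (@top_swap _ _ x x' (cl (FSetSub kMf))).
  congr (top_ranking _ _); exact: (@eq_getf _ _ P).
have D : delta (top_profile x' P) = delta (top_profile x P).
  by rewrite -E -neu.
by move=> z; rewrite D.
Qed.
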